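(* Let $I=1$ and let $\mathbf s_{T,u}^{\mathrm T}$ denote the $u$-th row of $\mathbf S_T$ for some $u\in\{1,\dots,U\}$. Suppose the jammer transmits $\mathbf w_T=\mathbf s_{T,u}$ during the pilot phase and some fixed $\mathbf w_D\in\mathcal S^D$ during the data phase (so $\|\mathbf w_D\|_0=D$). If $\mathbf S_D$ is uniformly distributed on $\mathcal S^{U\times D}$, then the jammer is eclipsed (with channel estimation) with probability at least $1-4^{-D}$.
   Context: Let $U,T,D$ be positive integers with $T\ge U$, $\mathcal S=\{(\pm1\pm i)/\sqrt2\}\subset\mathbb C$ (QPSK), and $\mathbf S_T\in\mathbb C^{U\times T}$ a fixed pilot matrix of full row rank $U$; $\mathbf A^\dagger$ is the Moore–Penrose pseudoinverse. Eclipsing with channel estimation (single-antenna case): given $\mathbf S_D\in\mathcal S^{U\times D}$, $\mathbf w_T\in\mathbb C^T$, $\mathbf w_D\in\mathbb C^D$, the jammer is eclipsed if there exists $\tilde{\mathbf S}_D\in\mathcal S^{U\times D}\setminus\{\mathbf S_D\}$ such that $\begin{bmatrix}\mathbf S_D-\tilde{\mathbf S}_D\\ \mathbf w_D^{\mathrm T}-\mathbf w_T^{\mathrm T}\mathbf S_T^\dagger\tilde{\mathbf S}_D\end{bmatrix}$ has rank at most $1$. *)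

(* Defs.v *)
From HB Require Import structures.
From mathcomp Require Import all_boot all_order all_algebra all_field.
Set Implicit Arguments. Unset Strict Implicit. Unset Printing Implicit Defensive.
Import Order.TTheory GRing.Theory Num.Theory.
Local Open Scope ring_scope.

Definition qpsk (b : bool * bool) : algC :=
  ((if b.1 then 1 else -1) + (if b.2 then 1 else -1) * 'i) / sqrtC 2.

Definition is_qpsk (x : algC) : bool := [exists b, x == qpsk b].

Definition ctrmx (m n : nat) (A : 'M[algC]_(m, n)) : 'M[algC]_(n, m) :=
  (map_mx Num.conj A)^T.

Definition is_mp_pinv (m n : nat) (A : 'M[algC]_(m, n)) (X : 'M[algC]_(n, m)) : Prop :=
  [/\ A *m X *m A = A, X *m A *m X = X,
      ctrmx (A *m X) = A *m X & ctrmx (X *m A) = X *m A].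

(* Eclipsing with channel estimation, single-antenna case.
   SDt ranges over S^{U x D} \ {SD}, encoded by sign-pair matrices. *)
Definition eclipsed (U T D : nat) (STdag : 'M[algC]_(T, U))
  (SD : 'M[algC]_(U, D)) (wT : 'cV[algC]_T) (wD : 'cV[algC]_D) : bool :=
  [exists B : 'M[bool * bool]_(U, D),
     (map_mx qpsk B != SD) &&
     (\rank (col_mx (SD - map_mx qpsk B) (wD^T - wT^T *m STdag *m map_mx qpsk B)) <= 1)%N].

(* Main.v *)
Require Import Defs.
From HB Require Import structures.
From mathcomp Require Import all_boot all_order all_algebra all_field.
Import Order.TTheory GRing.Theory Num.Theory.
Local Open Scope ring_scope.
From mathcomp Require Import lra.
Lemma qpsk_inj : injective qpsk.
Proof.
move=> [a b] [c d]; rewrite /qpsk /=.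
have s2 : sqrtC 2 != 0 :> algC by rewrite sqrtC_eq0 pnatr_eq0.
move/(congr1 (fun x => x * sqrtC 2)); rewrite !divfK //.
set s := fun b : bool => (if b then 1 else -1) : algC.
have sr : forall b, s b \is Num.real by case; rewrite /s ?realN real1.
move=> e.
have hre := congr1 (fun x => 'Re x) e; have him := congr1 (fun x => 'Im x) e.
rewrite /= ![_ * 'i]mulrC ?Re_rect ?Im_rect ?sr // in hre him.
have h2 : (1 : algC) != -1.
  by rewrite -subr_eq0 opprK -(natrD _ 1 1) pnatr_eq0.
have si : injective s.
  case; case => //=; rewrite /s => h; move/eqP: h2 => h2; exfalso; apply: h2 => //; exact: esym.
by rewrite (si _ _ hre) (si _ _ him).
Qed.
Lemma pinv_right (U T : nat) (ST : 'M[algC]_(U, T)) (hST : \rank ST = U)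
  (STdag : 'M[algC]_(T, U)) (hdag : is_mp_pinv ST STdag) : ST *m STdag = 1%:M.
Proof.
case: hdag => h1 _ _ _.
have /row_freeP [B hB] : row_free ST by rewrite /row_free hST.
have := congr1 (fun M => M *m B) h1.
by rewrite /= -!mulmxA hB !mulmx1.
Qed.

Lemma ecl_good (U T D : nat) (ST : 'M[algC]_(U, T)) (hST : \rank ST = U)
  (STdag : 'M[algC]_(T, U)) (hdag : is_mp_pinv ST STdag)
  (u : 'I_U) (wD : 'cV[algC]_D) (b0 : 'rV[bool * bool]_D)
  (hb0 : forall j, qpsk (b0 0 j) = wD j 0)
  (B : 'M[bool * bool]_(U, D)) (hB : ~~ [forall j, qpsk (B u j) == wD j 0]) :
  eclipsed STdag (map_mx qpsk B) (row u ST)^T wD.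
Proof.
apply/existsP; exists (\matrix_(i, j) if i == u then b0 0 j else B i j).
set B' := \matrix_(i, j) _.
have rowB' : row u (map_mx qpsk B') = wD^T.
  by apply/rowP => j; rewrite !mxE eqxx hb0.
apply/andP; split.
  apply/negP => /eqP e; move/negP: hB; apply; apply/forallP => j.
  move/matrixP: e => /(_ u j); rewrite /B' !mxE eqxx => <-.
  by rewrite hb0.
rewrite trmxK -row_mul pinv_right // -row_mul mul1mx rowB' subrr.
set X := _ - _.
have -> : col_mx X (0 : 'rV_D) = col_mx (delta_mx u 0 : 'cV_U) (0 : 'cV_1) *m row u X.
  rewrite mul_col_mx mul0mx; congr col_mx.
  apply/matrixP => i j; rewrite !mxE big_ord1 !mxE eqxx andbT.
  case: eqP => [->|/eqP ne]; first by rewrite mul1r.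
  by rewrite mul0r subrr.
by apply: leq_trans (mxrankM_maxl _ _) (rank_leq_col _).
Qed.
Theorem theorem4 (U T D : nat) (hU : (0 < U)%N) (hD : (0 < D)%N) (hTU : (U <= T)%N)
  (ST : 'M[algC]_(U, T)) (hST : \rank ST = U)
  (STdag : 'M[algC]_(T, U)) (hdag : is_mp_pinv ST STdag)
  (u : 'I_U) (wD : 'cV[algC]_D) (hwD : forall j, is_qpsk (wD j 0)) :
  ((#|[set B : 'M[bool * bool]_(U, D) |
        eclipsed STdag (map_mx qpsk B) (row u ST)^T wD]|%:R
    / #|{: 'M[bool * bool]_(U, D)}|%:R : rat)
   >= 1 - (4%:R ^- D : rat)).
Proof.
pose b0 : 'rV[bool * bool]_D :=
  \row_j odflt (true, true) [pick b | wD j 0 == qpsk b].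
have hb0 : forall j, qpsk (b0 0 j) = wD j 0.
  move=> j; rewrite mxE; case: pickP => [b /eqP -> //|none].
  by have /existsP [b /eqP hb] := hwD j; move: (none b); rewrite hb eqxx.
set E := [set B | _].
pose Bad := [set B : 'M[bool * bool]_(U, D) | [forall j, qpsk (B u j) == wD j 0]].
have sub : ~: Bad \subset E.
  apply/subsetP => B; rewrite !inE => hB.
  exact: (@ecl_good _ _ _ _ hST _ hdag _ _ _ hb0 _ hB).
pose f (p : 'rV[bool * bool]_D * 'M[bool * bool]_(U, D)) : 'M[bool * bool]_(U, D) :=
  \matrix_(i, j) if i == u then p.1 0 j else p.2 i j.
have finj : {in setX [set: 'rV[bool * bool]_D] Bad &, injective f}.
  move=> [r B] [r' B']; rewrite !inE /= => hB hB' e.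
  have e' := fun i j => congr1 (fun M : 'M_(U, D) => M i j) e.
  congr pair.
    apply/rowP => j; have := e' u j; by rewrite /f /= !mxE eqxx.
  apply/matrixP => i j; have := e' i j; rewrite /f /= !mxE.
  case: eqP => [-> _|//]; apply: qpsk_inj.
  by move/forallP: hB => /(_ j) /eqP ->; move/forallP: hB' => /(_ j) /eqP ->.
have cnt : (#|Bad| * 4 ^ D <= #|{: 'M[bool * bool]_(U, D)}|)%N.
  have := max_card (mem (f @: setX [set: 'rV[bool * bool]_D] Bad)).
  rewrite card_in_imset // cardsX cardsT card_mx card_prod card_bool mul1n mulnC.
  by [].
have cE : (#|~: Bad| <= #|E|)%N by apply: subset_leq_card.
have cB := cardsC Bad.
set N := #|{: 'M[bool * bool]_(U, D)}| in cnt *.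
have Npos : (0 < N)%N.
  by rewrite /N card_mx card_prod card_bool expn_gt0.
have Nr : (0 : rat) < N%:R by rewrite ltr0n.
rewrite ler_pdivlMr //.
have h1 : (#|Bad|%:R * (4%:R ^+ D) <= N%:R :> rat).
  by rewrite -natrX -natrM ler_nat.
have h2 : (N%:R <= #|E|%:R + #|Bad|%:R :> rat).
  by rewrite -natrD ler_nat /N -cB addnC leq_add2r.
have h3 : (4%:R ^- D * 4%:R ^+ D = 1 :> rat).
  by rewrite mulVf // expf_neq0 // pnatr_eq0.
have h4 : (0 : rat) <= 4%:R ^- D by rewrite invr_ge0 exprn_ge0 // ler0n.
move: h1 h2 h3 h4; set x := 4%:R ^- D; set y := 4%:R ^+ D.
move=> h1 h2 h3 h4.
have h5 : #|Bad|%:R <= N%:R * x.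
  have := ler_wpM2r h4 h1; by rewrite -mulrA (mulrC y) h3 mulr1.
lra.
Qed.
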